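(* Let $f\in\mathbb{Z}[[x]]$ with $f(0)=0$, $f'(0)\in\{1,-1\}$, let $\rho,\sigma,\pi\in\mathbb{Z}$, and set $$g(x)=\left(\frac{f(x)}{x}\right)^{\rho}\big(f'(x)\big)^{\sigma}\left(\frac{f(x)-1}{x-1}\right)^{\pi}.$$ Suppose the Riordan array $\upsilon_f[\rho,\sigma,\pi]=(g(x),f(x))$ is an involution. Then the almost Riordan array $$\left(\left(\frac{f(x)}{x}\right)^{\rho-1}\big(f'(x)\big)^{\sigma}\left(\frac{f(x)-1}{x-1}\right)^{\pi};\ g(x),\ f(x)\right)$$ is also an involution in the group of almost Riordan arrays of first order.
   Context: All matrices are infinite lower-triangular with rows and columns indexed by $n,k\ge0$. $[x^n]h(x)$ denotes the coefficient of $x^n$ in $h$. The Riordan array $(g,f)$ is the matrix with entries $[x^n]g(x)f(x)^k$; it is an involution if $(g,f)^2=(1,x)$, equivalently $g(x)g(f(x))=1$ and $f(f(x))=x$. An almost Riordan array of first order $(a;g,f)$ has associated matrix $M$ with $M_{0,0}=a_0$, $M_{0,k}=0$ for $k\ge1$, $M_{n,0}=a_n$ for $n\ge1$, and $M_{n,k}=[x^{n-1}]\,g(x)f(x)^{k-1}$ for $n,k\ge1$; it is an involution if $M^2=I$. *)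

(* Defs.v *)
(* Formal power series over Z are coefficient sequences nat -> int;
   infinite lower-triangular matrices are functions nat -> nat -> int. *)
From HB Require Import structures.
From mathcomp Require Import all_boot all_order all_algebra.
Set Implicit Arguments. Unset Strict Implicit. Unset Printing Implicit Defensive.
Import Order.TTheory GRing.Theory Num.Theory.
Local Open Scope ring_scope.

Definition ps := nat -> int.

Definition psone : ps := fun n => (n == 0%N)%:R.
Definition pssub (a b : ps) : ps := fun n => a n - b n.
Definition psmul (a b : ps) : ps := fun n => \sum_(i < n.+1) a i * b (n - i)%N.
Definition pspow (a : ps) (k : nat) : ps := iter k (psmul a) psone.

(* multiplicative inverse of a series whose constant term is a unit of Z
   (coefficients computed by the standard recursion) *)
Fixpoint psinv_seq (a : ps) (n : nat) : seq int :=
  match n with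
  | 0%N => [:: (a 0%N)^-1]
  | n'.+1 => let s := psinv_seq a n' in
      rcons s (- (a 0%N)^-1 * \sum_(1 <= i < n'.+2) a i * s`_(n'.+1 - i))
  end.
Definition psinv (a : ps) : ps := fun n => (psinv_seq a n)`_n.

Definition pszpow (a : ps) (z : int) : ps :=
  match z with
  | Posz k => pspow a k
  | Negz k => pspow (psinv a) k.+1
  end.

Definition psderiv (a : ps) : ps := fun n => a n.+1 *+ n.+1.
(* a(x)/x, for a with a(0) = 0 *)
Definition psdivx (a : ps) : ps := fun n => a n.+1.
(* the all-ones series 1/(1-x) *)
Definition psgeom : ps := fun _ => 1.
(* (a(x)-1)/(x-1) = (1-a(x)) * 1/(1-x) *)
Definition psquot1 (a : ps) : ps := psmul (pssub psone a) psgeom.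

Definition imat := nat -> nat -> int.
Definition imul (A B : imat) : imat :=
  fun n k => \sum_(j < n.+1) A n j * B j k.
Definition iid : imat := fun n k => (n == k)%:R.
Definition involution (M : imat) : Prop := forall n k, imul M M n k = iid n k.

Definition riordan (g f : ps) : imat := fun n k => psmul g (pspow f k) n.

Definition almost_riordan (a g f : ps) : imat := fun n k =>
  match k, n with
  | 0%N, _ => a n
  | _.+1, 0%N => 0
  | k'.+1, n'.+1 => psmul g (pspow f k') n'
  end.

Definition upsilon_g (f : ps) (rho sigma pi : int) : ps :=
  psmul (psmul (pszpow (psdivx f) rho) (pszpow (psderiv f) sigma))
        (pszpow (psquot1 f) pi).

(* Main.v *)
Require Import Defs.
From mathcomp Require Import all_boot all_order all_algebra.
From mathcomp Require Import zify.
From Stdlib Require Import FunctionalExtensionality.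
Import GRing.Theory Num.Theory.
Local Open Scope ring_scope.

Definition P (N : nat) (a : ps) : {poly int} := \poly_(i < N) a i.

Lemma psmulE a b n N : (n < N)%N -> psmul a b n = (P N a * P N b)`_n.
Proof.
move=> nN; rewrite coefM /psmul; apply: eq_bigr => i _.
rewrite !coef_poly.
have iN : (i < N)%N by apply: leq_ltn_trans nN; rewrite -ltnS.
have jN : (n - i < N)%N by apply: leq_ltn_trans nN; apply: leq_subr.
by rewrite iN jN.
Qed.

Lemma coefM_agree (p q r : {poly int}) n :
  (forall j, (j <= n)%N -> p`_j = q`_j) -> (p * r)`_n = (q * r)`_n.
Proof.
move=> H; rewrite !coefM; apply: eq_bigr => i _; rewrite H //.
by rewrite -ltnS.
Qed.

Lemma psmulC a b : psmul a b = psmul b a.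
Proof.
apply: functional_extensionality => n.
by rewrite !(psmulE _ _ _ _ (ltnSn n)) mulrC.
Qed.

Lemma P_mul a b N n (nN : (n < N)%N) :
  forall j, (j <= n)%N -> (P N (psmul a b))`_j = (P N a * P N b)`_j.
Proof.
move=> j jn; have jN : (j < N)%N by apply: leq_ltn_trans nN.
by rewrite coef_poly jN (psmulE _ _ _ _ jN).
Qed.

Lemma psmulA a b c : psmul a (psmul b c) = psmul (psmul a b) c.
Proof.
apply: functional_extensionality => n.
rewrite !(psmulE _ _ _ _ (ltnSn n)).
rewrite (mulrC (P n.+1 a)) (coefM_agree _ _ _ _ (P_mul _ _ _ _ (ltnSn n))).
rewrite (coefM_agree _ _ _ _ (P_mul _ _ _ _ (ltnSn n))).
by rewrite (mulrC _ (P n.+1 a)) mulrA.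
Qed.

Lemma psmul1 a : psmul psone a = a.
Proof.
apply: functional_extensionality => n.
rewrite /psmul big_ord_recl /= /psone /= mul1r subn0 big1 ?addr0 // => i _.
by rewrite mul0r.
Qed.

Lemma psmulr1 a : psmul a psone = a.
Proof. by rewrite psmulC psmul1. Qed.

Definition shift (c : ps) : ps := fun j => if j is j'.+1 then c j' else 0.

Lemma psmul_shiftl c d : psmul (shift c) d = shift (psmul c d).
Proof.
apply: functional_extensionality => n.
rewrite /psmul big_ord_recl /= mul0r add0r.
case: n => [|n] /=; first by rewrite big_ord0.
by apply: eq_bigr => i _.
Qed.

Lemma psmul_shiftr c d : psmul c (shift d) = shift (psmul c d).
Proof. by rewrite psmulC psmul_shiftl psmulC. Qed.

Lemma size_psinv a n : size (psinv_seq a n) = n.+1.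
Proof. by elim: n => [|n IH] //=; rewrite size_rcons IH. Qed.

Lemma psinv_prefix a n i : (i <= n)%N -> (psinv_seq a n)`_i = psinv a i.
Proof.
elim: n => [|n IH] hi.
  by move: hi; rewrite leqn0 => /eqP ->.
rewrite leq_eqVlt in hi; case/orP: hi => [/eqP -> //|hi].
by rewrite /= nth_rcons size_psinv hi IH.
Qed.

Lemma psinv0 a : psinv a 0 = (a 0%N)^-1.
Proof. by []. Qed.

Lemma psinvS a n : psinv a n.+1 =
  - (a 0%N)^-1 * \sum_(1 <= i < n.+2) a i * psinv a (n.+1 - i)%N.
Proof.
rewrite /psinv /= nth_rcons size_psinv ltnn eqxx; congr (_ * _).
apply: eq_big_nat => i /andP [i1 _]; rewrite psinv_prefix //.
by case: i i1 => // i _; rewrite subSS leq_subr.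
Qed.

Lemma psinvK a : (a 0%N = 1 \/ a 0%N = -1) -> psmul (psinv a) a = psone.
Proof.
move=> ha; have ua : a 0%N \is a GRing.unit.
  by case: ha => ->; rewrite ?unitr1 ?unitrN1.
apply: functional_extensionality => n; rewrite psmulC /psmul /psone.
case: n => [|n].
  by rewrite big_ord1 /= psinv0 mulrV.
rewrite big_ord_recl /= subn0 psinvS mulrA mulrN mulrV // mulN1r.
rewrite big_add1 /= big_mkord addrC; apply/eqP; rewrite subr_eq0; apply/eqP.
apply: eq_bigr => i _; by rewrite /bump /= add1n.
Qed.
Lemma pszpow_pred h z : psmul (psinv h) h = psone ->
  psmul (pszpow h (z - 1)) h = pszpow h z.
Proof.
move=> Hh; case: z => [[|k]|k].
- have -> : (Posz 0 - 1 = Negz 0) by [].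
  by rewrite /= psmulr1 Hh.
- have -> : (Posz k.+1 - 1 = Posz k) by lia.
  by rewrite /= psmulC.
- have -> : (Negz k - 1 = Negz k.+1) by rewrite !NegzE; lia.
  rewrite /= -psmulA (psmulC _ h) psmulA.
  by rewrite Hh psmul1.
Qed.

Definition lower (X : imat) := forall n k, (n < k)%N -> X n k = 0.
Definition Dm : imat := fun n k => (n == k.+1)%:R.
Definition Tm (b : ps) : imat := fun n k => if (k <= n)%N then b (n - k)%N else 0.

Lemma sum_delta (F : nat -> int) N m :
  \sum_(j < N) F j * ((j : nat) == m)%:R = if (m < N)%N then F m else 0.
Proof.
elim: N => [|N IH]; first by rewrite big_ord0.
rewrite big_ord_recr /= IH.
have [lt|gt|->] := ltngtP m N.
- by rewrite mulr0 addr0 ltnS (ltnW lt).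
- by rewrite ltnS leqNgt gt /= mulr0 addr0.
- by rewrite ltnSn mulr1 add0r.
Qed.

Lemma imulA A B C : lower B -> imul (imul A B) C = imul A (imul B C).
Proof.
move=> lB; apply: functional_extensionality => n;
  apply: functional_extensionality => k.
rewrite /imul.
under eq_bigr => j _ do rewrite big_distrl /=.
rewrite exchange_big /=; apply eq_bigr => i _.
rewrite big_distrr /=.
rewrite (big_ord_widen n.+1 (fun j => A n i * (B i j * C j k))); last first.
  by case: i.
rewrite [RHS]big_mkcond /=; apply: eq_bigr => j _.
rewrite mulrA; case: ifP => // /negbT; rewrite -leqNgt => ij.
by rewrite lB ?mulr0 ?mul0r.
Qed.

Lemma lower_mul A B : lower B -> lower (imul A B).
Proof.
move=> lB n k nk; rewrite /imul big1 // => j _.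
by rewrite lB ?mulr0 //; apply: leq_ltn_trans nk; rewrite -ltnS.
Qed.

Lemma lower_iid : lower iid.
Proof. by move=> n k nk; rewrite /iid (ltn_eqF nk). Qed.

Lemma lower_Dm : lower Dm.
Proof.
by move=> n k nk; rewrite /Dm; case: eqP => // e; move: nk; rewrite e ltnNge leqnSn.
Qed.

Lemma lower_Tm b : lower (Tm b).
Proof. by move=> n k nk; rewrite /Tm leqNgt nk. Qed.

Lemma imul1m A : imul iid A = A.
Proof.
apply: functional_extensionality => n; apply: functional_extensionality => k.
rewrite /imul /iid.
under eq_bigr => j _ do rewrite mulrC eq_sym.
by rewrite (sum_delta (fun j => A j k)) ltnSn.
Qed.

Lemma imulm1 A : lower A -> imul A iid = A.
Proof.
move=> lA; apply: functional_extensionality => n; apply: functional_extensionality => k.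
rewrite /imul /iid (sum_delta (fun j => A n j)); case: ifP => // /negbT; rewrite -leqNgt => h.
by rewrite lA.
Qed.

Lemma imul_D X n k : imul Dm X n k = if n is n'.+1 then X n' k else 0.
Proof.
rewrite /imul /Dm; case: n => [|n].
  by rewrite big1 // => j _; rewrite mul0r.
under eq_bigr => j _ do rewrite eqSS mulrC eq_sym.
by rewrite (sum_delta (fun j => X j k)) ltnS leqnSn.
Qed.

Lemma imul_rD X : lower X -> forall n k, imul X Dm n k = X n k.+1.
Proof.
move=> lX n k; rewrite /imul /Dm (sum_delta (fun j => X n j)); case: ifP => // /negbT.
by rewrite -leqNgt => h; rewrite lX.
Qed.

Lemma imul_T b X n k : imul (Tm b) X n k = psmul (fun j => X j k) b n.
Proof.
rewrite /imul /psmul /Tm; apply: eq_bigr => j _.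
by rewrite -ltnS ltn_ord mulrC.
Qed.

Lemma Dm_cancel X Y : imul Dm X = imul Dm Y -> X = Y.
Proof.
move=> H; apply: functional_extensionality => n; apply: functional_extensionality => k.
have := congr1 (fun Z => Z n.+1 k) H; by rewrite /= !imul_D.
Qed.

Ltac lowt := repeat apply: lower_mul; assumption.
Ltac rA := rewrite imulA; try solve [lowt].
Ltac rA' := rewrite -imulA; try solve [lowt].

Lemma abstract_inv (R Nh Tf M : imat) :
  lower R -> lower Nh -> lower Tf -> lower M ->
  imul R R = iid -> imul R Dm = imul Tf R -> imul Dm Nh = Tf ->
  imul Nh M = R -> imul M M = iid.
Proof.
move=> lR lN lT lM RR E1 E2 E3.
have lD := lower_Dm.
have S4 : Dm = imul R (imul Tf R).
  by rewrite -E1; rA'; rewrite RR imul1m.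
have S5 : Dm = imul Dm (imul Nh (imul R (imul Nh R))).
  rewrite {1}S4 -{1}E2; rA; rA'; rewrite E1 -E2; rA; rA; done.
have S6 : imul Nh (imul R (imul Nh R)) = iid.
  by apply: Dm_cancel; rewrite -S5 imulm1.
have S7 : imul R (imul Nh (imul R Nh)) = iid.
  have := congr1 (fun Z => imul R (imul Z R)) S6.
  rewrite /= imul1m RR => <-.
  rewrite -[in LHS](imulm1 (imul R (imul Nh (imul R Nh)))); last by lowt.
  rewrite -RR; repeat rA; done.
have S8 : M = imul R Nh.
  rewrite -(imul1m M) -S7; repeat rA; rewrite E3 RR imulm1 //.
rewrite S8 -S7; repeat rA; done.
Qed.

Lemma lower_pspow f k n : f 0%N = 0 -> (n < k)%N -> pspow f k n = 0.
Proof.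
move=> f0; elim: k n => [|k IH] n //= nk.
rewrite /psmul big1 // => i _.
have [->|i0] := eqVneq (i : nat) 0%N; first by rewrite f0 mul0r.
rewrite IH ?mulr0 //.
move: i0; rewrite -lt0n => i0; have := ltn_ord i; lia.
Qed.

Lemma lower_riordan g f : f 0%N = 0 -> lower (riordan g f).
Proof.
move=> f0 n k nk; rewrite /riordan /psmul big1 // => i _.
rewrite lower_pspow ?mulr0 //; apply: leq_ltn_trans nk; apply: leq_subr.
Qed.

Lemma lower_almost a g f : f 0%N = 0 -> lower (almost_riordan a g f).
Proof.
move=> f0 n k nk; rewrite /almost_riordan.
case: k nk => [|k] //; case: n => [|n] // nk.
by apply: lower_riordan.
Qed.

Lemma E1 g f : f 0%N = 0 ->
  imul (riordan g f) Dm = imul (Tm f) (riordan g f).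
Proof.
move=> f0; apply: functional_extensionality => n; apply: functional_extensionality => k.
rewrite imul_rD; last by apply: lower_riordan.
rewrite imul_T /riordan /=.
by rewrite -psmulA (psmulC (pspow f k) f).
Qed.

Lemma shift_divx f : f 0%N = 0 -> shift (psdivx f) = f.
Proof.
by move=> f0; apply: functional_extensionality => -[|n].
Qed.

Lemma E2 f : f 0%N = 0 -> imul Dm (Tm (psdivx f)) = Tm f.
Proof.
move=> f0; apply: functional_extensionality => n; apply: functional_extensionality => k.
rewrite imul_D /Tm; case: n => [|n].
  by case: k => [|k] //=.
case: (ltngtP k n.+1) => h.
- have kn : (k <= n)%N by rewrite -ltnS.
  by rewrite kn /psdivx subSn.
- by rewrite leqNgt (ltnW h).
- by rewrite h ltnn subnn f0.
Qed.

Lemma E3 a g f : f 0%N = 0 -> psmul a (psdivx f) = g ->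
  imul (Tm (psdivx f)) (almost_riordan a g f) = riordan g f.
Proof.
move=> f0 Hag; apply: functional_extensionality => n; apply: functional_extensionality => k.
rewrite imul_T /riordan; case: k => [|k].
  by rewrite /almost_riordan /= Hag psmulr1.
have -> : (fun j => almost_riordan a g f j k.+1) = shift (psmul g (pspow f k)).
  by apply: functional_extensionality => -[|j].
have Hf : psmul f (pspow f k) = shift (psmul (psdivx f) (pspow f k)).
  by rewrite -psmul_shiftl shift_divx.
rewrite psmul_shiftl /= Hf psmul_shiftr -psmulA (psmulC (pspow f k)).
by [].
Qed.

Theorem mainTheorem11 (f : ps) (rho sigma pi : int) :
  f 0%N = 0 ->
  (f 1%N = 1 \/ f 1%N = -1) ->
  involution (riordan (upsilon_g f rho sigma pi) f) ->
  involution (almost_riordan (upsilon_g f (rho - 1) sigma pi)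
                             (upsilon_g f rho sigma pi) f).
Proof.
move=> f0 f1 Hinv.
set g := upsilon_g f rho sigma pi.
set a := upsilon_g f (rho - 1) sigma pi.
have Hh : psmul (psinv (psdivx f)) (psdivx f) = psone by apply: psinvK.
have Hag : psmul a (psdivx f) = g.
  rewrite /a /g /upsilon_g -psmulA (psmulC _ (psdivx f)) psmulA.
  rewrite -(psmulA _ _ (psdivx f)) (psmulC _ (psdivx f)) psmulA.
  by rewrite pszpow_pred.
have RR : imul (riordan g f) (riordan g f) = iid.
  by apply: functional_extensionality => n; apply: functional_extensionality => k.
have := @abstract_inv (riordan g f) (Tm (psdivx f)) (Tm f)
  (almost_riordan a g f) (lower_riordan g _ f0) (lower_Tm _) (lower_Tm _)
  (lower_almost a g _ f0) RR (E1 g _ f0) (E2 _ f0) (E3 a g _ f0 Hag).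
by move=> H n k; rewrite H.
Qed.
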